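(* Let $q=p^n$ with $p$ prime, $m\ge1$, and $r=t(q-1)+s$ with integers $t\ge0$, $0\le s\le q-2$, and $r<m(q-1)$. If $f$ is a nonzero codeword of $R_q(r,m)$ of minimal weight $(q-s)q^{m-t-1}$, then its support $S_f$ is contained in an affine subspace of $\mathbb{F}_q^m$ of codimension $t$.
   Context: $B_m^q=\mathbb{F}_q[X_1,\dots,X_m]/(X_1^q-X_1,\dots,X_m^q-X_m)$ is identified with the algebra of functions $\mathbb{F}_q^m\to\mathbb{F}_q$. For $f\in B_m^q$, $S_f=\{x : f(x)\neq0\}$ and $|f|=\mathrm{Card}(S_f)$. The degree of $P\in B_m^q$ is the total degree of its representative of degree at most $q-1$ in each variable, and $R_q(r,m)=\{P\in B_m^q:\deg P\le r\}$. The minimum weight of a nonzero codeword of $R_q(r,m)$, for $r=t(q-1)+s$, $0\le s\le q-2$, $r<m(q-1)$, is $(q-s)q^{m-t-1}$. *)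

(* Defs.v *)
From HB Require Import structures.
From mathcomp Require Import all_boot all_order all_algebra all_field.
Set Implicit Arguments. Unset Strict Implicit. Unset Printing Implicit Defensive.
Import GRing.Theory.
Local Open Scope ring_scope.

(* Points of F^m are row vectors 'rV[F]_m; elements of B_m^q are functions
   'rV[F]_m -> F (with q = #|F|). *)

Definition rexp (F : finFieldType) (m : nat) := {ffun 'I_m -> 'I_#|F|}.

Definition tdeg (F : finFieldType) (m : nat) (e : rexp F m) : nat :=
  (\sum_(i < m) (e i : nat))%N.

Definition monom (F : finFieldType) (m : nat) (e : rexp F m) (x : 'rV[F]_m) : F :=
  \prod_(i < m) x 0 i ^+ e i.

(* f belongs to R_q(r,m): its (unique) representative of degree <= q-1 in
   each variable has total degree <= r, i.e. f is an F-linear combination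
   of reduced monomials of total degree <= r. *)
Definition in_RM (F : finFieldType) (r m : nat) (f : 'rV[F]_m -> F) : Prop :=
  exists c : rexp F m -> F,
    forall x, f x = \sum_(e : rexp F m | (tdeg e <= r)%N) c e * monom e x.

Definition supp (F : finFieldType) (m : nat) (f : 'rV[F]_m -> F) : {set 'rV[F]_m} :=
  [set x | f x != 0].

Definition weight (F : finFieldType) (m : nat) (f : 'rV[F]_m -> F) : nat :=
  #|supp f|.

Definition in_affine_codim (F : finFieldType) (m k : nat) (S : {set 'rV[F]_m}) : Prop :=
  exists (a : 'rV[F]_m) (V : 'M[F]_m),
    \rank V = (m - k)%N /\ forall x, x \in S -> (x - a <= V)%MS.

(* Main.v *)
Require Import Defs.
From HB Require Import structures.
From mathcomp Require Import all_boot all_order all_algebra all_field.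
From Stdlib Require Import Lia.
Set Implicit Arguments. Unset Strict Implicit. Unset Printing Implicit Defensive.
Import GRing.Theory.

Ltac conv := repeat match goal with H : is_true (_ <= _)%N |- _ => apply (elimT leP) in H end;
  try (match goal with |- is_true (_ <= _)%N => apply/leP end);
  change addn with Nat.add in *; change subn with Nat.sub in *; change muln with Nat.mul in *.
Ltac zl := conv; lia.
Ltac zn := conv; nia.

Section Arith.
Variable Q : nat.
Hypothesis Q0 : 0 < Q.
Local Notation q := Q.+1.

Definition W (r m : nat) : nat :=
  if r < m * Q then (q - r %% Q) * q ^ (m - r %/ Q - 1) else 1.

Lemma W_ts t s m : s < Q -> W (t * Q + s) m =
  if t * Q + s < m * Q then (q - s) * q ^ (m - t - 1) else 1.
Proof.
move=> sQ; rewrite /W divnMDl // divn_small // addn0.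
by rewrite modnMDl modn_small.
Qed.

Lemma W_pos r m : 0 < W r m.
Proof.
rewrite /W; case: ifP => // _; rewrite muln_gt0 expn_gt0 /= andbT subn_gt0.
by rewrite ltnS ltnW // ltn_mod.
Qed.

Lemma W_ge2 r m : r < m * Q -> 2 <= W r m.
Proof.
move=> h; rewrite /W h; have hs : r %% Q < Q by rewrite ltn_mod.
have := expn_gt0 q (m - r %/ Q - 1); rewrite /= => hp.
apply: leq_trans (leq_pmulr _ hp); by zl.
Qed.

Lemma poly1 s k u : s < q -> k <= s -> 0 < u ->
  (q - s) * (q * u) <= (q - k) * ((q - (s - k)) * u).
Proof.
move=> h1 h2 h3.
have [v ->] : exists v, q = s + v by exists (q - s); zl.
have [w ->] : exists w, s = k + w by exists (s - k); zl.
rewrite addKn [k + w - k]addKn -[k + w + v]addnA addKn addnA addnAC addnK.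
zn.
Qed.

Lemma NLgen r m' k : k < q -> k <= r -> r < m'.+1 * Q ->
  [/\ k <= r %% Q -> r %/ Q = (r - k) %/ Q /\
         (W r m'.+1 <= (q - k) * W (r - k) m'),
      k <= r %% Q -> ~~ (r - k < m' * Q) -> r %/ Q = m' &
      r %% Q < k -> W r m'.+1 <= (q - k) * W (r - k) m' /\
         (k < Q -> W r m'.+1 < (q - k) * W (r - k) m')].
Proof.
move=> kq kr rm.
have sQ : r %% Q < Q by rewrite ltn_mod.
have Hr := divn_eq r Q.
set t := r %/ Q in Hr *; set s := r %% Q in Hr sQ *.
clearbody t s; subst r.
have tm : t <= m'.
  rewrite -ltnS -(ltn_pmul2r Q0); apply: leq_ltn_trans rm; exact: leq_addr.
split.
- move=> ks; have -> : t * Q + s - k = t * Q + (s - k) by zl.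
  rewrite divnMDl // divn_small ?addn0; last by zl.
  split => //.
  rewrite W_ts // rm W_ts; last by zl.
  case: ifP => h.
    have tm' : t < m'.
      rewrite -(ltn_pmul2r Q0); apply: leq_ltn_trans h; exact: leq_addr.
    have -> : m'.+1 - t - 1 = (m' - t - 1).+1 by zl.
    rewrite expnS; apply: poly1 => //; first by zl.
    by rewrite expn_gt0.
  have -> : t = m'.
    apply/eqP; rewrite eqn_leq tm /= -ltnS -(ltn_pmul2r Q0) mulSn.
    move/negbT: h; rewrite -leqNgt => h; apply: leq_ltn_trans h _; zl.
  have -> : m'.+1 - m' - 1 = 0 by zl.
  rewrite expn0 !muln1; zl.
- move=> ks h; apply/eqP; rewrite eqn_leq tm /= -ltnS -(ltn_pmul2r Q0) mulSn.
  rewrite -leqNgt in h; apply: leq_ltn_trans h _; zl.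
- move=> sk.
  have t0 : 0 < t.
    rewrite lt0n; apply/eqP => t0; move: kr; rewrite t0 mul0n add0n leqNgt sk //.
  have [t' tt'] : exists t', t = t'.+1 by exists t.-1; rewrite prednK.
  have -> : t * Q + s - k = t' * Q + (Q + s - k) by rewrite tt' mulSn; zl.
  rewrite W_ts // rm W_ts; last by zl.
  have -> : t' * Q + (Q + s - k) < m' * Q.
    apply: leq_trans (_ : t * Q <= m' * Q); last by rewrite leq_pmul2r.
    rewrite tt' mulSn; zl.
  have -> : m'.+1 - t - 1 = m' - t' - 1 by rewrite tt'; zl.
  set u := q ^ _.
  have u0 : 0 < u by rewrite expn_gt0.
  have -> : q - (Q + s - k) = k - s + 1 by zl.
  split.
    rewrite mulnA leq_pmul2r //; zn.
  by move=> kQ; rewrite mulnA ltn_pmul2r //; zn.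
Qed.

End Arith.

Local Open Scope ring_scope.

Section Deg.
Variable F : finFieldType.
Local Notation q := #|F|.

Lemma q_gt1 : (1 < q)%N.
Proof. exact: finNzRing_gt1. Qed.

Lemma D_ext m r (f g : 'rV[F]_m -> F) :
  in_RM r f -> (forall x, f x = g x) -> in_RM r g.
Proof. by case=> c Hc Hfg; exists c => x; rewrite -Hfg. Qed.

Lemma D0 m r : in_RM r (fun _ : 'rV[F]_m => 0).
Proof. by exists (fun _ => 0) => x; rewrite big1 // => e _; rewrite mul0r. Qed.

Lemma DD m r (f g : 'rV[F]_m -> F) :
  in_RM r f -> in_RM r g -> in_RM r (fun x => f x + g x).
Proof.
case=> c Hc [d Hd]; exists (fun e => c e + d e) => x.
by rewrite Hc Hd -big_split /=; apply: eq_bigr => e _; rewrite mulrDl.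
Qed.

Lemma DZ m r a (f : 'rV[F]_m -> F) :
  in_RM r f -> in_RM r (fun x => a * f x).
Proof.
case=> c Hc; exists (fun e => a * c e) => x.
by rewrite Hc mulr_sumr; apply: eq_bigr => e _; rewrite mulrA.
Qed.

Lemma Dsum m r (I : Type) (s : seq I) (P : pred I) (h : I -> 'rV[F]_m -> F) :
  (forall i, P i -> in_RM r (h i)) ->
  in_RM r (fun x => \sum_(i <- s | P i) h i x).
Proof.
move=> H; elim: s => [|i s IH].
  by apply: D_ext (D0 m r) _ => x; rewrite big_nil.
case Pi: (P i).
  by apply: D_ext (DD (H i Pi) IH) _ => x; rewrite big_cons Pi.
by apply: D_ext IH _ => x; rewrite big_cons Pi.
Qed.

Lemma Dmono m r1 r2 (f : 'rV[F]_m -> F) :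
  (r1 <= r2)%N -> in_RM r1 f -> in_RM r2 f.
Proof.
move=> le [c Hc]; exists (fun e => if (tdeg e <= r1)%N then c e else 0) => x.
rewrite Hc [RHS]big_mkcond [LHS]big_mkcond /=; apply: eq_bigr => e _.
case: ifP => h1; first by rewrite (leq_trans h1 le).
by case: ifP => //; rewrite mul0r.
Qed.

Lemma expr_red (x : F) a c : (0 < c)%N -> x ^+ (a * q.-1 + c) = x ^+ c.
Proof.
move=> c0; elim: a => [|a IH]; first by rewrite mul0n add0n.
have q1 := q_gt1.
rewrite mulSn -addnA exprD IH; case: c c0 {IH} => // c _.
by rewrite exprS mulrA -exprSr prednK ?(ltnW q1) // expf_card.
Qed.

Definition red (n : nat) : nat := if n == 0%N then 0%N else ((n.-1) %% q.-1).+1.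

Lemma red_lt n : (red n < q)%N.
Proof.
rewrite /red; case: eqP => _; first by rewrite (ltn_trans _ q_gt1).
have q1 := q_gt1.
rewrite -[q in (_ < q)%N](prednK (ltnW q1)) ltnS ltn_mod.
by rewrite -ltnS prednK ?(ltnW q1).
Qed.

Lemma red_le n : (red n <= n)%N.
Proof.
rewrite /red; case: eqP => [->|/eqP n0] //.
by rewrite -[n in (_ <= n)%N](prednK _) ?lt0n // ltnS leq_mod.
Qed.

Lemma expr_redE (x : F) n : x ^+ n = x ^+ red n.
Proof.
rewrite /red; case: eqP => [->|/eqP n0] //.
rewrite {1}(_ : n = (n.-1 %/ q.-1) * q.-1 + ((n.-1 %% q.-1).+1))%N.
  by rewrite expr_red.
by rewrite addnS -divn_eq prednK // lt0n.
Qed.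

Definition gmon m (n : 'I_m -> nat) (x : 'rV[F]_m) : F := \prod_(i < m) x 0 i ^+ n i.

Lemma Dgmon m r (n : 'I_m -> nat) : (\sum_(i < m) n i <= r)%N -> in_RM r (gmon n).
Proof.
move=> le.
pose E : rexp F m := [ffun i => Ordinal (red_lt (n i))].
have hE : (tdeg E <= r)%N.
  apply: leq_trans le; rewrite /tdeg; apply: leq_sum => i _.
  by rewrite ffunE /= red_le.
exists (fun e => if e == E then 1 else 0) => x.
rewrite (bigD1 E) //= eqxx mul1r big1 ?addr0.
  by rewrite /gmon /monom; apply: eq_bigr => i _; rewrite ffunE /= -expr_redE.
by move=> e /andP[_ /negPf ->]; rewrite mul0r.
Qed.

Lemma Dmul m a b (f g : 'rV[F]_m -> F) :
  in_RM a f -> in_RM b g -> in_RM (a + b) (fun x => f x * g x).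
Proof.
case=> c Hc [d Hd].
have H : in_RM (a + b) (fun x => \sum_(e : rexp F m | (tdeg e <= a)%N)
           \sum_(e' : rexp F m | (tdeg e' <= b)%N) (c e * d e') * gmon (fun i => e i + e' i)%N x).
  apply: Dsum => e he; apply: Dsum => e' he'; apply: DZ; apply: Dgmon.
  by rewrite big_split /= leq_add.
apply: D_ext H _ => x; rewrite Hc Hd mulr_suml; apply: eq_bigr => e _.
rewrite mulr_sumr; apply: eq_bigr => e' _.
rewrite mulrACA; congr (_ * _); rewrite /gmon /monom -big_split /=.
by apply: eq_bigr => i _; rewrite exprD.
Qed.

Lemma Dconst m a : in_RM 0 (fun _ : 'rV[F]_m => a).
Proof.
have := DZ a (@Dgmon m 0 (fun _ => 0%N) _); rewrite big1 // => /(_ isT) H.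
by apply: D_ext H _ => x; rewrite /gmon big1 ?mulr1.
Qed.

Lemma Dcoord m (i : 'I_m) : in_RM 1 (fun x : 'rV[F]_m => x 0 i).
Proof.
have H := @Dgmon m 1 (fun j => (j == i : nat)) _.
apply: D_ext (H _) _ => [|x].
  by rewrite (bigD1 i) //= eqxx big1 // => j /negPf ->.
rewrite /gmon (bigD1 i) //= eqxx expr1 big1 ?mulr1 // => j /negPf ->.
by rewrite expr0.
Qed.

Lemma Dprod_seq m (I : Type) (s : seq I) (n : I -> nat) (h : I -> 'rV[F]_m -> F) :
  (forall i, in_RM (n i) (h i)) ->
  in_RM (\sum_(i <- s) n i) (fun x => \prod_(i <- s) h i x).
Proof.
move=> H; elim: s => [|i s IH].
  by rewrite big_nil; apply: D_ext (Dconst m 1) _ => x; rewrite big_nil.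
by rewrite big_cons; apply: D_ext (Dmul (H i) IH) _ => x; rewrite big_cons.
Qed.

Lemma Dpow m a k (f : 'rV[F]_m -> F) : in_RM a f -> in_RM (a * k) (fun x => f x ^+ k).
Proof.
move=> H; elim: k => [|k IH].
  by rewrite muln0; apply: D_ext (Dconst m 1) _ => x; rewrite expr0.
by rewrite mulnS; apply: D_ext (Dmul H IH) _ => x; rewrite exprS.
Qed.

Lemma Dcomp m m' r (phi : 'rV[F]_m -> 'rV[F]_m') (f : 'rV[F]_m' -> F) :
  (forall i, in_RM 1 (fun x => phi x 0 i)) -> in_RM r f ->
  in_RM r (fun x => f (phi x)).
Proof.
move=> Hphi [c Hc].
have H : in_RM r (fun x => \sum_(e : rexp F m' | (tdeg e <= r)%N) c e * monom e (phi x)).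
  apply: Dsum => e he; apply: DZ; apply: Dmono he _.
  have := @Dprod_seq m _ (index_enum 'I_m') (fun i => 1 * e i)%N
            (fun i x => phi x 0 i ^+ e i) (fun i => Dpow (e i) (Hphi i)).
  have -> : tdeg e = (\sum_(i <- index_enum 'I_m') (1 * e i))%N.
    by rewrite /tdeg; apply: eq_bigr => i _; rewrite mul1n.
  by move=> H; apply: D_ext H _.
by apply: D_ext H _ => x; rewrite Hc.
Qed.

End Deg.


Section Dec.
Variable F : finFieldType.
Local Notation q := #|F|.
Variable m' : nat.
Variable j : 'I_m'.+1.

Definition ext (y : F) (x : 'rV[F]_m') : 'rV[F]_m'.+1 :=
  \row_i (if unlift j i is Some l then x 0 l else y).
Definition rest (z : 'rV[F]_m'.+1) : 'rV[F]_m' := \row_(l < m') z 0 (lift j l).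

Lemma ext_j y x : ext y x 0 j = y.
Proof. by rewrite mxE unlift_none. Qed.
Lemma ext_lift y x l : ext y x 0 (lift j l) = x 0 l.
Proof. by rewrite mxE liftK. Qed.
Lemma rest_ext y x : rest (ext y x) = x.
Proof. by apply/rowP => l; rewrite mxE ext_lift. Qed.
Lemma ext_rest (z : 'rV[F]_m'.+1) : ext (z 0 j) (rest z) = z.
Proof.
apply/rowP => i; rewrite mxE; case: unliftP => [l ->|->] //.
by rewrite mxE.
Qed.

Lemma monom_ext (e : rexp F m'.+1) y x :
  monom e (ext y x) = y ^+ e j * gmon (fun l => e (lift j l) : nat) x.
Proof.
rewrite /monom (bigD1_ord j) //= ext_j; congr (_ * _).
by rewrite /gmon; apply: eq_bigr => l _; rewrite ext_lift.
Qed.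

Lemma tdeg_split (e : rexp F m'.+1) :
  tdeg e = (e j + \sum_(l < m') e (lift j l))%N.
Proof. by rewrite /tdeg (bigD1_ord j). Qed.

Lemma decomp r (f : 'rV[F]_m'.+1 -> F) : in_RM r f ->
  exists g : nat -> 'rV[F]_m' -> F,
    [/\ forall i, (i <= r)%N -> in_RM (r - i) (g i),
        forall i x, (r < i)%N -> g i x = 0 &
        forall y x, f (ext y x) = \sum_(i < q) g i x * y ^+ i].
Proof.
case=> c Hc.
pose g i x := \sum_(e : rexp F m'.+1 | (tdeg e <= r)%N && (e j == i :> nat))
                c e * gmon (fun l => e (lift j l) : nat) x.
exists g; split.
- move=> i ir; apply: Dsum => e /andP[he /eqP hj]; apply: DZ; apply: Dgmon.
  by rewrite leq_subRL ?ir // -hj -tdeg_split.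
- move=> i x ri; rewrite /g big1 // => e /andP[he /eqP hj].
  move: he; rewrite tdeg_split hj => he.
  by move: (leq_trans (leq_addr _ _) he); rewrite leqNgt ri.
- move=> y x; rewrite Hc (partition_big (fun e : rexp F m'.+1 => e j) xpredT) //=.
  apply: eq_bigr => i _; rewrite /g mulr_suml; apply: eq_bigr => e /andP[_ /eqP hj].
  by rewrite monom_ext hj [y ^+ i * _]mulrC mulrA.
Qed.

Lemma weight_fibers (f : 'rV[F]_m'.+1 -> F) :
  weight f = (\sum_(x : 'rV[F]_m') #|[set y : F | f (ext y x) != 0%R]|)%N.
Proof.
rewrite /weight /supp -sum1_card.
rewrite (reindex (fun p : F * 'rV[F]_m' => ext p.1 p.2)) /=; last first.
  exists (fun z : 'rV[F]_m'.+1 => (z 0 j, rest z)) => [[y x] _|z _] /=.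
    by rewrite ext_j rest_ext.
  by rewrite ext_rest.
rewrite -(pair_big_dep xpredT (fun y x => ext y x \in [set z | f z != 0]) (fun _ _ => 1%N)) /=.
rewrite (exchange_big_dep xpredT) //=; apply: eq_bigr => x _.
rewrite -sum1_card; apply: eq_bigl => y; by rewrite !inE.
Qed.

End Dec.

Section Roots.
Variable F : finFieldType.
Local Notation q := #|F|.

Lemma root_count (a : nat -> F) k : (k < q)%N -> a k != 0 ->
  (forall i, (k < i < q)%N -> a i = 0) ->
  (q - k <= #|[set y : F | (\sum_(i < q) a i * y ^+ i)%R != 0%R]|)%N.
Proof.
move=> kq ak hi.
pose P := \poly_(i < k.+1) a i.
have HP : forall y, P.[y] = \sum_(i < q) a i * y ^+ i.
  move=> y; rewrite horner_poly (big_ord_widen q (fun i => a i * y ^+ i) kq).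
  rewrite big_mkcond /=; apply: eq_bigr => i _; case: ifP => // /negbT.
  by rewrite -leqNgt => ki; rewrite hi ?ki ?ltn_ord // mul0r.
have P0 : P != 0.
  apply/eqP => P0; move: ak.
  have := coef_poly k.+1 a k; rewrite ltnSn -/P P0 coef0 => <-.
  by rewrite eqxx.
pose Z := [set y | P.[y] == 0].
have HZ : (#|Z| <= k)%N.
  rewrite -ltnS; apply: leq_trans (size_poly _ _).
  rewrite cardE; apply: max_poly_roots P0 _ (enum_uniq _).
  by apply/allP => y; rewrite mem_enum inE.
have -> : [set y : F | (\sum_(i < q) a i * y ^+ i)%R != 0%R] = ~: Z.
  by apply/setP => y; rewrite !inE HP.
by rewrite -(cardsC Z) leq_subLR leq_add2r.
Qed.
End Roots.



Lemma sum_lb (T : finType) (S : {set T}) (c : T -> nat) a b x1 :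
  (forall x, a * (x \in S) + b * (x == x1) <= c x)%N ->
  (a * #|S| + b <= \sum_x c x)%N.
Proof.
move=> H; apply: (leq_trans _ (@leq_sum _ (index_enum T) xpredT _ _ (fun x _ => H x))).
rewrite big_split /= -!big_distrr /=.
have -> : (\sum_(x : T) (x \in S : nat))%N = #|S|.
  by rewrite -sum1_card [RHS]big_mkcond /=; apply: eq_bigr => x _; case: (x \in S).
have -> : (\sum_(x : T) (x == x1 : nat))%N = 1%N.
  by rewrite (bigD1 x1) //= eqxx big1 // => x /negPf ->.
by rewrite muln1.
Qed.

Section Main.
Variable F : finFieldType.
Local Notation q := #|F|.
Local Notation Q := (#|F|.-1).

Lemma qE : q = Q.+1.
Proof. by rewrite prednK // (ltn_trans _ (q_gt1 F)). Qed.

Lemma Q0 : (0 < Q)%N.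
Proof. by rewrite -ltnS -qE q_gt1. Qed.

Lemma top_coeff m' (j : 'I_m'.+1) r (f : 'rV[F]_m'.+1 -> F) (g : nat -> 'rV[F]_m' -> F) :
  (forall i x, (r < i)%N -> g i x = 0) ->
  (forall y x, f (ext j y x) = \sum_(i < q) g i x * y ^+ i) ->
  (exists z, f z != 0) ->
  exists k, [/\ (k < q)%N, (k <= r)%N, exists x, g k x != 0 &
     forall i x, (k < i < q)%N -> g i x = 0].
Proof.
move=> gr Hf [z fz].
pose P i := (i < q)%N && [exists x, g i x != 0].
have exP : exists i, P i.
  move: fz; rewrite -(ext_rest j z) Hf => fz.
  case: (boolP [exists i : 'I_q, g i (rest j z) != 0]).
    by case/existsP => i gi; exists i; rewrite /P ltn_ord; apply/existsP; exists (rest j z).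
  rewrite negb_exists => /forallP H; case/eqP: fz; rewrite big1 // => i _.
  by move: (H i); rewrite negbK => /eqP ->; rewrite mul0r.
have ubP : forall i, P i -> (i <= q)%N by move=> i /andP[/ltnW].
case: (ex_maxnP exP ubP) => k /andP[kq /existsP[x gx]] Hmax.
exists k; split => //.
- rewrite leqNgt; apply/negP => rk; by move: gx; rewrite gr // eqxx.
- by exists x.
- move=> i y /andP[ki iq]; apply/eqP; apply: contraTT ki => giy.
  rewrite -leqNgt; apply: Hmax; rewrite /P iq; apply/existsP; by exists y.
Qed.

End Main.

Section Main2.
Variable F : finFieldType.
Local Notation q := #|F|.
Local Notation Q := (#|F|.-1).

Lemma fiber_lb m' (j : 'I_m'.+1) (f : 'rV[F]_m'.+1 -> F) (g : nat -> 'rV[F]_m' -> F) k x :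
  (forall y x, f (ext j y x) = \sum_(i < q) g i x * y ^+ i) ->
  (k < q)%N -> (forall i x, (k < i < q)%N -> g i x = 0) -> g k x != 0 ->
  (q - k <= #|[set y | f (ext j y x) != 0%R]|)%N.
Proof.
move=> Hf kq Hk gx.
have -> : [set y | f (ext j y x) != 0] = [set y | (\sum_(i < q) g i x * y ^+ i)%R != 0].
  by apply/setP => y; rewrite !inE Hf.
by apply: (@root_count F (fun i => g i x)) => // i hi; apply: Hk.
Qed.

Lemma LB m : forall r (f : 'rV[F]_m -> F), in_RM r f -> (exists x, f x != 0) ->
  (W Q r m <= weight f)%N.
Proof.
elim: m => [|m' IH] r f Hf [z fz].
  rewrite /W mul0n ltn0; apply/card_gt0P; exists z; by rewrite inE.
have [g [Hg1 Hg2 Hg3]] := decomp ord0 Hf.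
have [k [kq kr [x0 gx0] Hk]] := top_coeff Hg2 Hg3 (ex_intro _ z fz).
have IHk := IH (r - k)%N (g k) (Hg1 k kr) (ex_intro _ x0 gx0).
have Hw : ((q - k) * weight (g k) <= weight f)%N.
  rewrite (weight_fibers ord0) -[X in (X <= _)%N]addn0.
  apply: (@sum_lb _ _ _ _ 0 x0) => x; rewrite mul0n addn0.
  case: (boolP (x \in supp (g k))); last by rewrite muln0.
  by rewrite inE muln1 => gx; apply: fiber_lb Hg3 kq Hk gx.
have HW : (W Q r m'.+1 <= (q - k) * W Q (r - k) m')%N.
  case h : (r < m'.+1 * Q)%N; last first.
    rewrite [W _ r _]/W h muln_gt0 subn_gt0 kq /=; exact: (W_pos (Q0 F)).
  rewrite qE in kq *; have [H1 _ H3] := NLgen (Q0 F) kq kr h.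
  by case: (leqP k (r %% Q)) => hk; [case: (H1 hk)|case: (H3 hk)].
apply: leq_trans HW (leq_trans _ Hw); by rewrite leq_mul2l IHk orbT.
Qed.

End Main2.


Section LA.
Variable F : finFieldType.

Lemma rest0E m' (z : 'rV[F]_m'.+1) : rest ord0 z = rsubmx (z : 'rV_(1 + m')).
Proof.
apply/rowP => l; rewrite !mxE; congr (z 0 _); exact: val_inj.
Qed.

Lemma lift_aff m' t (S' : {set 'rV[F]_m'}) (S : {set 'rV[F]_m'.+1}) :
  (t <= m')%N -> in_affine_codim t S' ->
  (forall z, z \in S -> rest ord0 z \in S') -> in_affine_codim t S.
Proof.
move=> tm [a' [V' [rk HV]]] HS.
exists (row_mx (0 : 'rV_1) a'), (block_mx (1%:M : 'M_1) 0 0 V').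
split.
  have H : \rank (block_mx (1%:M : 'M[F]_1) 0 0 V') = (1 + (m' - t))%N.
    by rewrite rank_diag_block_mx mxrank1 rk.
  have E : (1 + (m' - t) = m'.+1 - t)%N by rewrite add1n subSn.
  exact (etrans H E).
move=> z /HS /HV; rewrite rest0E => /submxP[w Hw].
set z' : 'rV[F]_(1 + m') := z.
have E : z' - row_mx 0 a' =
          row_mx (lsubmx z') w *m block_mx (1%:M : 'M[F]_1) 0 0 V'.
  rewrite mul_row_block !mulmx0 mulmx1 addr0 add0r -Hw.
  rewrite -[z' in LHS](hsubmxK z') opp_row_mx add_row_mx oppr0 addr0.
  by [].
have := submxMl (row_mx (lsubmx z') w) (block_mx (1%:M : 'M[F]_1) 0 0 V').
rewrite -E; exact.
Qed.

Lemma unit_row m (j : 'I_m) (v : 'rV[F]_m) : v 0 j != 0 ->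
  (\matrix_(i, l) (if i == j then v 0 l else (i == l)%:R)) \in unitmx.
Proof.
move=> vj; set N := \matrix_(i, l) _.
rewrite -row_free_unit -kermx_eq0; apply/rowV0P => u /sub_kermxP uN.
have Hc : forall l, u 0 j * v 0 l + (if l == j then 0 else u 0 l) = 0.
  move=> l; have := congr1 (fun A : 'rV[F]_m => A 0 l) uN; rewrite !mxE (bigD1 j) //= !mxE eqxx.
  move=> H; apply: (etrans _ H); congr (_ + _).
  case: eqP => [->|/eqP lj].
    by rewrite big1 // => i /negPf ij; rewrite /N !mxE ij mulr0.
  rewrite (bigD1 l) //= big1 ?addr0; last first.
    by move=> i /andP[/negPf ij /negPf il]; rewrite /N !mxE ij il mulr0.
  by rewrite /N !mxE (negPf lj) eqxx mulr1.
have uj : u 0 j = 0.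
  by have := Hc j; rewrite eqxx addr0 => /eqP; rewrite mulf_eq0 (negPf vj) orbF => /eqP.
apply/rowP => l; rewrite mxE; case: (eqVneq l j) => [->//|lj].
by have := Hc l; rewrite uj mul0r add0r (negPf lj).
Qed.

Lemma good_basis m (v : 'rV[F]_m.+1) : v != 0 ->
  exists M : 'M[F]_m.+1, M \in unitmx /\ 'e_0 *m M = v.
Proof.
move=> v0.
have [j vj] : exists j, v 0 j != 0.
  apply/existsP; apply: contraR v0 => /existsPn H; apply/eqP/rowP => j.
  by rewrite mxE; apply/eqP; rewrite -[_ == _]negbK H.
set N := \matrix_(i, l) (if i == j then v 0 l else (i == l)%:R).
exists (xrow 0 j N); split.
  by rewrite xrowE unitmx_mul unitmx_perm unit_row.
by apply/rowP => l; rewrite -rowE !mxE perm.tpermL eqxx.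
Qed.

End LA.


Section MainProof.
Variable F : finFieldType.
Local Notation q := #|F|.
Local Notation Q := (#|F|.-1).


Lemma wlb m' (S : {set 'rV[F]_m'}) (c : 'rV[F]_m' -> nat) a :
  (forall x, x \in S -> (a <= c x)%N) -> (a * #|S| <= \sum_x c x)%N.
Proof.
move=> H; rewrite -[X in (X <= _)%N]addn0.
apply: (@sum_lb _ _ _ _ 0 0) => x; rewrite mul0n addn0.
by case: (boolP (x \in S)) => xS; [rewrite muln1 H|rewrite muln0].
Qed.

Lemma main_step m'
  (IHm : forall r (f : 'rV[F]_m' -> F), in_RM r f -> (exists x, f x != 0) ->
     (r < m' * Q)%N -> weight f = W Q r m' -> in_affine_codim (r %/ Q) (supp f))
  r (f : 'rV[F]_m'.+1 -> F) x0 y1 y2 :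
  in_RM r f -> (r < m'.+1 * Q)%N -> weight f = W Q r m'.+1 -> y1 != y2 ->
  f (ext ord0 y1 x0) != 0 -> f (ext ord0 y2 x0) != 0 ->
  in_affine_codim (r %/ Q) (supp f).
Proof.
move=> Hf hr Hw y12 f1 f2.
have fz : exists z, f z != 0 by exists (ext ord0 y1 x0).
have [g [Hg1 Hg2 Hg3]] := decomp ord0 Hf.
have [k [kq kr [x' gx'] Hk]] := top_coeff Hg2 Hg3 fz.
set S := supp (g k).
have LBk := LB (Hg1 k kr) (ex_intro _ x' gx').
have kq' : (k < Q.+1)%N by rewrite -qE.
have [H1 H2 H3] := NLgen (Q0 F) kq' kr hr.
set c := fun x => #|[set y | f (ext ord0 y x) != 0]|.
have Hwf : weight f = (\sum_x c x)%N := weight_fibers ord0 f.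
have Hfib : forall x, x \in S -> (q - k <= c x)%N.
  by move=> x; rewrite inE => gx; apply: fiber_lb Hg3 kq Hk gx.
have HqS : ((q - k) * #|S| <= weight f)%N by rewrite Hwf; apply: wlb.
rewrite qE in Hfib HqS.
case: (leqP k (r %% Q)) => hk; last first.
  exfalso; case: (ltnP k Q) => kQ.
    have := (H3 hk).2 kQ; rewrite -Hw => /leq_trans/(_ (leq_mul (leqnn _) LBk)).
    by move=> h; have := leq_trans h HqS; rewrite ltnn.
  have kE : k = Q by apply/eqP; rewrite eqn_leq kQ -ltnS kq'.
  have e1 : (Q.+1 - k = 1)%N by rewrite kE subSnn.
  have : (1 * #|S| + 1 <= weight f)%N.
    rewrite Hwf; apply: sum_lb => x; case: eqP => [->|_].
      have : ([set y1; y2] \subset [set y | f (ext ord0 y x0) != 0]).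
        by apply/subsetP => y; rewrite !inE => /orP[]/eqP->.
      move/subset_leq_card; rewrite cards2 y12 => h2.
      apply: leq_trans h2; rewrite mul1n muln1; by case: (x0 \in S).
    rewrite muln0 addn0 mul1n; case: (boolP (x \in S)) => // xS.
    by have := Hfib x xS; rewrite e1.
  have := (H3 hk).1; rewrite -Hw e1 mul1n => h.
  rewrite mul1n addn1 => h'; have := leq_trans h' (leq_trans h LBk).
  by rewrite /weight -/S ltnn.
have [Heq Hle] := H1 hk.
have Hsub : forall z, z \in supp f -> rest ord0 z \in S.
  move=> z; rewrite inE => fz'; apply/negPn/negP => nS.
  have : ((Q.+1 - k) * #|S| + 1 <= weight f)%N.
    rewrite Hwf; apply: (@sum_lb _ _ _ _ 1 (rest ord0 z)) => x.
    case: eqP => [->|_].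
      rewrite (negPf nS) muln0 add0n muln1 card_gt0; apply/set0Pn.
      by exists (z 0 ord0); rewrite inE ext_rest.
    rewrite muln0 addn0; case: (boolP (x \in S)) => xS.
      by rewrite muln1 Hfib.
    by rewrite muln0.
  rewrite addn1 => h.
  have := leq_trans Hle (leq_mul (leqnn _) LBk).
  by rewrite -Hw => h2; have := leq_ltn_trans h2 h; rewrite ltnn.
have HS : #|S| = W Q (r - k) m'.
  apply/eqP; rewrite eqn_leq LBk andbT.
  rewrite -(@leq_pmul2l (Q.+1 - k)) ?subn_gt0 //.
  by apply: leq_trans HqS _; rewrite Hw.
apply: lift_aff Hsub.
  by rewrite -ltnS ltn_divLR ?Q0.
case h2 : (r - k < m' * Q)%N.
  by rewrite Heq; apply: IHm (Hg1 k kr) _ h2 HS; exists x'.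
rewrite (H2 hk (negbT h2)).
have : #|S| == 1%N by rewrite HS /W h2.
case/cards1P => x'' SE.
exists x'', 0; split; first by rewrite mxrank0 subnn.
by move=> x; rewrite SE inE => /eqP ->; rewrite subrr sub0mx.
Qed.


Lemma main m : forall r (f : 'rV[F]_m -> F), in_RM r f -> (exists x, f x != 0) ->
  (r < m * Q)%N -> weight f = W Q r m -> in_affine_codim (r %/ Q) (supp f).
Proof.
elim: m => [|m' IH] r f Hf fz hr Hw; first by rewrite mul0n in hr.
have : (1 < weight f)%N.
  rewrite Hw; exact (W_ge2 (Q0 F) hr).
case/card_gt1P => a [b [ain bin ab]].
have ba : b - a != 0 by rewrite subr_eq0 eq_sym.
have [M [uM eM]] := good_basis ba.
pose f' := fun z : 'rV[F]_m'.+1 => f (z *m M).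
have Hf' : in_RM r f'.
  apply: (Dcomp (phi := fun z : 'rV[F]_m'.+1 => z *m M)) Hf => i.
  have H : in_RM 1 (fun z : 'rV[F]_m'.+1 => \sum_(l < m'.+1 | true) M l i * z 0 l).
    by apply: Dsum => l _; apply: DZ; apply: Dcoord.
  by apply: D_ext H _ => z; rewrite mxE; apply: eq_bigr => l _; rewrite mulrC.
have Hw' : weight f' = weight f.
  rewrite /weight.
  have -> : supp f = [set z *m M | z in supp f'].
    apply/setP => x; rewrite inE; apply/idP/imsetP.
      by move=> fx; exists (x *m invmx M); rewrite ?inE /f' mulmxKV.
    by case=> z; rewrite inE /f' => fz' ->.
  by rewrite card_imset //; apply: can_inj (mulmxK uM).
pose a' := a *m invmx M.
pose b' := a' + 'e_0.
have eb : b' *m M = b by rewrite mulmxDl mulmxKV // eM addrC subrK.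
have ea : a' *m M = a by rewrite mulmxKV.
have rab : rest ord0 b' = rest ord0 a'.
  apply/rowP => l; rewrite !mxE eqxx /=.
  by rewrite addr0.
have yab : a' 0 ord0 != b' 0 ord0.
  by rewrite !mxE !eqxx /= eq_sym -subr_eq0 addrAC subrr add0r oner_eq0.
have := @main_step m' IH r f' (rest ord0 a') _ _ Hf' hr (etrans Hw' Hw) yab.
rewrite ext_rest -rab ext_rest /f' ea eb.
rewrite inE in ain; rewrite inE in bin.
case/(_ ain bin) => a0 [V0 [rk HV]].
exists (a0 *m M), (V0 *m M); split.
  by rewrite mxrankMfree // row_free_unit.
move=> x; rewrite inE => fx.
have := HV (x *m invmx M); rewrite inE /f' mulmxKV // => /(_ fx).
by move/(submxMr M); rewrite mulmxBl mulmxKV.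
Qed.

End MainProof.


Unset Implicit Arguments.

Theorem mainTheorem2 (F : finFieldType) (p n q m t s r : nat)
  (f : 'rV[F]_m -> F) :
  prime p -> #|F| = q -> q = (p ^ n)%N -> (1 <= m)%N ->
  r = (t * (q - 1) + s)%N -> (s <= q - 2)%N -> (r < m * (q - 1))%N ->
  in_RM r f -> (exists x, f x != 0) ->
  weight f = ((q - s) * q ^ (m - t - 1))%N ->
  in_affine_codim t (supp f).
Proof.
move=> _ Fq _ _ Hr hs hr Hf fz Hw.
have Q0 := Q0 F.
have q1 := q_gt1 F.
have eQ : (#|F|.-1 = q - 1)%N by rewrite Fq subn1.
have sQ : (s < #|F|.-1)%N.
  rewrite eQ; apply: leq_ltn_trans hs _; rewrite -Fq.
  by rewrite -subSn ?ltnS ?subSS // -subn1 ltn_sub2l // ltnW.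
have ht : (r %/ #|F|.-1 = t)%N.
  by rewrite Hr -eQ divnMDl // divn_small ?addn0.
rewrite -ht; apply: main => //; rewrite ?eQ //.
rewrite Hw Hr W_ts -?Hr ?hr -?eQ //.
by rewrite (prednK (ltnW q1)) Fq.
Qed.
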